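(* Let $\chi,m\geq 2$ be integers and write $R=\vec{R}(\chi)$. Then there exists an integer $M_0=M_0(\chi,m)$ such that the following holds for every $M\geq M_0$. Let the edges of $K=K^{(3)}_{RM}$ be coloured red/blue, and suppose $V(K)$ is partitioned into $R$ sets $V_1,\dots,V_R$ each inducing a red copy of $K^{(3)}_M$. Then at least one of the following holds: (a) for any collection of subsets $W_i\subseteq V_i$ with $|W_i|\geq M/2$ for all $i\in[R]$, there is a red tight path of length two in $K[\bigcup_{i\in[R]}W_i]$ connecting $W_j$ and $W_{j'}$ for some distinct $j,j'\in[R]$; (b) $K$ contains a blue copy of $H(TT_\chi,m)$.
   Context: $TT_\chi$ denotes the transitive tournament on $[\chi]$; $\vec{R}(\ell)$ is the least $N$ such that every tournament on at least $N$ vertices contains a copy of $TT_\ell$. For a tournament $T_\chi$ on $[\chi]$, $H(T_\chi,m)$ is the 3-uniform hypergraph on disjoint sets $A_1,\dots,A_\chi$ of size $m$ with edges $\{xyz: x,y\in A_i,\ z\in A_j,\ (i,j)\text{ an arc of }T_\chi\}$. A 3-uniform tight path of length two is a sequence of distinct vertices $v_1v_2v_3v_4$ with edges $v_1v_2v_3$ and $v_2v_3v_4$; its ends are $\{v_1,v_2\}$ and $\{v_3,v_4\}$, and it connects $S,S'$ if one end lies in $S$ and the other in $S'$. *)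

(* Defs.v *)
From mathcomp Require Import all_boot all_order.
Set Implicit Arguments. Unset Strict Implicit. Unset Printing Implicit Defensive.

Definition is_tournament (V : finType) (T : rel V) : Prop :=
  (forall x, ~~ T x x) /\ (forall x y, x != y -> T x y (+) T y x).

Definition contains_TT (V : finType) (T : rel V) (l : nat) : Prop :=
  exists f : 'I_l -> V, injective f /\ forall i j : 'I_l, i < j -> T (f i) (f j).

Definition tt_ramsey_prop (l N : nat) : Prop :=
  forall n, N <= n -> forall T : rel 'I_n, is_tournament T -> contains_TT T l.

Definition is_vecR (l R : nat) : Prop :=
  tt_ramsey_prop l R /\ forall N, N < R -> ~ tt_ramsey_prop l N.

(* 2-colourings of the triples of V: col e = true means red. *)
Definition red_triple (V : finType) (col : {set V} -> bool) (x y z : V) : bool :=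
  [&& x != y, y != z, x != z & col [set x; y; z]].

Definition blue_triple (V : finType) (col : {set V} -> bool) (x y z : V) : bool :=
  [&& x != y, y != z, x != z & ~~ col [set x; y; z]].

Definition red_tight_path2_connecting (V : finType) (col : {set V} -> bool)
    (S S' : {set V}) : Prop :=
  exists v1 v2 v3 v4 : V,
    uniq [:: v1; v2; v3; v4] /\
    red_triple col v1 v2 v3 /\ red_triple col v2 v3 v4 /\
    ((v1 \in S /\ v2 \in S /\ v3 \in S' /\ v4 \in S') \/
     (v1 \in S' /\ v2 \in S' /\ v3 \in S /\ v4 \in S)).

(* K contains a blue copy of H(TT_chi, m): an injective map of the vertex set
   A_1 u ... u A_chi (A_i = {i} x [m]) into V such that every edge
   {x,y,z} with x,y in A_i, z in A_j, (i,j) an arc of TT_chi (i<j), is blue. *)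
Definition blue_H_TT (V : finType) (col : {set V} -> bool) (chi m : nat) : Prop :=
  exists phi : 'I_chi * 'I_m -> V, injective phi /\
    forall (i j : 'I_chi) (a b c : 'I_m), i < j -> a != b ->
      blue_triple col (phi (i, a)) (phi (i, b)) (phi (j, c)).

(* Main.v *)
Require Import Defs.
From Stdlib Require Import Classical.
From mathcomp Require Import all_boot all_order.
From mathcomp Require Import zify.
Set Implicit Arguments. Unset Strict Implicit. Unset Printing Implicit Defensive.

Lemma subset_of_card (V : finType) (X : {set V}) k : k <= #|X| ->
  exists S : {set V}, S \subset X /\ #|S| = k.
Proof.
move=> hk; exists [set x in take k (enum X)]; split.
  by apply/subsetP=> x; rewrite inE => /mem_take; rewrite mem_enum.
rewrite cardsE; have /card_uniqP -> := take_uniq k (enum_uniq (mem X)).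
by rewrite size_take -cardE; case: ltngtP hk => // ->.
Qed.

Lemma bip (V : finType) (c : rel V) (t : nat) (X Y : {set V}) :
  2 * t <= #|X| -> t * 2 ^ (2 * t) < #|Y| ->
  exists (X' Y' : {set V}) (b : bool), [/\ X' \subset X, Y' \subset Y, t <= #|X'|, t <= #|Y'| &
     forall u v, u \in X' -> v \in Y' -> c u v = b].
Proof.
move=> hX hY; have [S [sSX cS]] := subset_of_card hX.
pose f v := [set u in S | c u v].
have [P PS hP] : exists2 P, P \in powerset S & t <= #|[set v in Y | f v == P]|.
  case: (pickP (fun P => (P \in powerset S) && (t <= #|[set v in Y | f v == P]|))).
    by move=> P /andP[h1 h2]; exists P.
  move=> hall; exfalso.
  have : #|Y| <= t * 2 ^ (2 * t).
    rewrite -sum1_card (partition_big f (fun P => P \in powerset S)); last first.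
      by move=> v _; rewrite powersetE; apply/subsetP=> u; rewrite inE => /andP[].
    rewrite -cS -card_powerset mulnC -sum_nat_const. apply: leq_sum => P PS.
    rewrite sum1dep_card; apply: ltnW; move: (hall P); rewrite PS /= => /negbT; rewrite -ltnNge.
    by congr (_ < _); apply: eq_card => v; rewrite !inE.
  by rewrite leqNgt hY.
have hYP : [set v in Y | f v == P] \subset Y by apply/subsetP=> v; rewrite inE => /andP[].
have hPS : P \subset S by rewrite inE in PS.
have : t <= #|P| \/ t <= #|S :\: P|.
  have := cardsID P S; rewrite (setIidPr hPS) cS; lia.
case=> [hp|hp].
  exists P, [set v in Y | f v == P], true; split => //.
    exact: subset_trans sSX.
  move=> u v uP; rewrite inE => /andP[_ /eqP fv]; move: uP; rewrite -fv inE.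
  by case/andP.
exists (S :\: P), [set v in Y | f v == P], false; split => //.
  by apply: subset_trans sSX; apply: subsetDl.
move=> u v; rewrite !inE => /andP[uP uS] /andP[_ /eqP fv].
by move: uP; rewrite -fv inE uS /=; case: (c u v).
Qed.

Definition G t := t * 2 ^ (2 * t) + 2 * t + 1.
Lemma G_ge t : t <= G t. Proof. rewrite /G; lia. Qed.

Lemma mono_seq (V : finType) (c : rel V) (R m : nat) (s : seq ('I_R * 'I_R)) :
  forall W : 'I_R -> {set V}, (forall i, iter (size s) G m <= #|W i|) ->
  exists A : 'I_R -> {set V}, (forall i, A i \subset W i /\ m <= #|A i|) /\
   forall pq, pq \in s -> pq.1 != pq.2 ->
     exists b, forall u v, u \in A pq.1 -> v \in A pq.2 -> c u v = b.
Proof.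
elim: s => [|[p q] s IH] W hW.
  by exists W; split => // i; split => //; apply: hW.
have [pq|npq] := eqVneq p q.
  have [A [hA1 hA2]] : exists A : 'I_R -> {set V}, (forall i, A i \subset W i /\ m <= #|A i|) /\
   forall pq, pq \in s -> pq.1 != pq.2 ->
     exists b, forall u v, u \in A pq.1 -> v \in A pq.2 -> c u v = b.
    apply: IH => i; apply: leq_trans (hW i); exact: G_ge.
  exists A; split => // pq'; rewrite inE => /orP[/eqP -> /=|]; last exact: hA2.
  by rewrite pq eqxx.
set t := iter (size s) G m.
have hp : 2 * t <= #|W p| by apply: leq_trans (hW p); rewrite /= /G -/t; lia.
have hq : t * 2 ^ (2 * t) < #|W q| by apply: leq_trans (hW q); rewrite /= /G -/t; lia.
have [X [Y [b [sX sY cX cY hb]]]] := bip c hp hq.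
pose W' i := if i == p then X else if i == q then Y else W i.
have sW' i : W' i \subset W i.
  by rewrite /W'; case: eqVneq => [->|_] //; case: eqVneq => [->|_].
have hW' i : t <= #|W' i|.
  rewrite /W'; case: eqVneq => _ //; case: eqVneq => _ //.
  by apply: leq_trans (hW i); apply: G_ge.
have [A [hA1 hA2]] := IH W' hW'.
exists A; split.
  by move=> i; have [h1 h2] := hA1 i; split => //; apply: subset_trans (sW' i).
move=> pq'; rewrite inE => /orP[/eqP -> _ /=|]; last exact: hA2.
exists b => u v uA vA; apply: hb.
  by have := subsetP (hA1 p).1 u uA; rewrite /W' eqxx.
by have := subsetP (hA1 q).1 v vA; rewrite /W' eqxx eq_sym (negbTE npq).
Qed.

Lemma set3_12 (V : finType) (a b c : V) : [set a; b; c] = [set b; a; c].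
Proof. by apply/setP=> z; rewrite !inE; case: (z == a); case: (z == b). Qed.
Lemma set3_rot (V : finType) (a b c : V) : [set a; b; c] = [set b; c; a].
Proof. by apply/setP=> z; rewrite !inE; case: (z == a); case: (z == b); case: (z == c). Qed.

Theorem lemma5p1 (chi m R : nat) :
  2 <= chi -> 2 <= m -> is_vecR chi R ->
  exists M0 : nat, forall M : nat, M0 <= M ->
  forall (col : {set 'I_(R * M)} -> bool) (part : 'I_(R * M) -> 'I_R),
    (forall i : 'I_R, #|[set v | part v == i]| = M) ->
    (forall x y z : 'I_(R * M), part x = part y -> part y = part z ->
        [&& x != y, y != z & x != z] -> red_triple col x y z) ->
    (forall W : 'I_R -> {set 'I_(R * M)},
        (forall i, W i \subset [set v | part v == i] /\ M <= 2 * #|W i|) ->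
        exists j j' : 'I_R, j != j' /\ red_tight_path2_connecting col (W j) (W j'))
    \/ blue_H_TT col chi m.
Proof.
move=> hchi hm hR.
exists (2 * iter (size (enum [set: 'I_R * 'I_R])) G m) => M hM col part hpart hred.
match goal with |- ?A \/ ?B => case: (classic A) => [h|h]; [by left|right] end.
have [W hW] := not_all_ex_not _ _ h.
have [hWp hnp] := imply_to_and _ _ hW.
have hWcls i v : v \in W i -> part v = i.
  by move=> vW; have := subsetP (hWp i).1 v vW; rewrite inE => /eqP.
have neqP (a b : 'I_(R * M)) : part a != part b -> a != b.
  by apply: contra => /eqP ->.
pose D (u v : 'I_(R * M)) := [forall x in W (part u), (x != u) ==> ~~ col [set u; x; v]].
have good p q u v : p != q -> u \in W p -> v \in W q -> D u v || D v u.
  move=> npq uW vW; apply/negPn/negP; rewrite negb_or => /andP[nu nv].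
  move/forallPn: nu => [x]; rewrite !negb_imply => /andP[xW /andP[xu /negPn cx]].
  move/forallPn: nv => [w]; rewrite !negb_imply => /andP[wW /andP[wv /negPn cw]].
  rewrite (hWcls _ _ uW) in xW cx; rewrite (hWcls _ _ vW) in wW cw.
  have px := hWcls _ _ xW; have pw := hWcls _ _ wW.
  have pu := hWcls _ _ uW; have pv := hWcls _ _ vW.
  have xv : x != v by apply: neqP; rewrite px pv.
  have xw : x != w by apply: neqP; rewrite px pw.
  have uv : u != v by apply: neqP; rewrite pu pv.
  have uw : u != w by apply: neqP; rewrite pu pw.
  move: cx cw; rewrite !negbK /= !andbT => cx cw.
  apply: hnp; exists p, q; split => //; exists x, u, v, w; split.
    by rewrite /= !inE !negb_or xu xv xw uv uw eq_sym wv.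
  split; first by rewrite /red_triple xu uv xv -set3_12 /= cx.
  split; first by rewrite /red_triple uv uw eq_sym wv /= set3_rot cw.
  by left.
have hWs i : iter (size (enum [set: 'I_R * 'I_R])) G m <= #|W i|.
  have := (hWp i).2; lia.
have [A [hA1 hA2]] := mono_seq D hWs.
pose Fp p q := [forall u in A p, forall v in A q, D u v].
have FF p q : p != q -> Fp p q || Fp q p.
  move=> npq; have pqs : (p, q) \in enum [set: 'I_R * 'I_R] by rewrite mem_enum inE.
  have [b hb] := hA2 (p, q) pqs npq.
  case: b hb => hb; apply/orP; [left|right]; apply/forallP=> u; apply/implyP=> uA;
    apply/forallP => v; apply/implyP => vA.
    exact: hb.
  have nqp : q != p by rewrite eq_sym.
  have := good q p u v nqp (subsetP (hA1 q).1 u uA) (subsetP (hA1 p).1 v vA).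
  by rewrite (hb v u vA uA) orbF.
pose T p q := [&& p != q, Fp p q & (~~ Fp q p || (p < q))].
have tourT : is_tournament T.
  split; first by move=> x; rewrite /T eqxx.
  move=> x y nxy; rewrite /T nxy eq_sym nxy /=.
  have := FF x y nxy; case: (Fp x y); case: (Fp y x) => //= _.
  case: ltngtP => // e; move/eqP: nxy; case; exact: val_inj.
have [f [finj hf]] := hR.1 R (leqnn R) T tourT.
have i0 : 'I_chi by exists 0; lia.
have : 0 < #|A (f i0)| by have := (hA1 (f i0)).2; lia.
case/card_gt0P => x0 _.
pose phi (ia : 'I_chi * 'I_m) := nth x0 (enum (A (f ia.1))) ia.2.
have phiA ia : phi ia \in A (f ia.1).
  rewrite -mem_enum; apply: mem_nth; rewrite -cardE.
  apply: leq_trans (hA1 _).2; exact: ltn_ord.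
have phiP ia : part (phi ia) = f ia.1 := hWcls _ _ (subsetP (hA1 _).1 _ (phiA ia)).
have phiinj : injective phi.
  move=> [i a] [j b] e.
  have fij : f i = f j by rewrite -(phiP (i, a)) -(phiP (j, b)) e.
  have ij := finj _ _ fij; subst j; congr pair; apply: val_inj; apply/eqP.
  rewrite -(nth_uniq x0 (s := enum (A (f i))) _ _ (enum_uniq _)); first exact/eqP.
    rewrite -cardE; apply: leq_trans (hA1 _).2; exact: ltn_ord.
  rewrite -cardE; apply: leq_trans (hA1 _).2; exact: ltn_ord.
exists phi; split => // i j a b c ij ab.
have pab : phi (i, a) != phi (i, b).
  by apply/eqP => /phiinj [e]; move: ab; rewrite e eqxx.
have pbc : phi (i, b) != phi (j, c).
  by apply/eqP => /phiinj [e _]; move: ij; rewrite e ltnn.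
have pac : phi (i, a) != phi (j, c).
  by apply/eqP => /phiinj [e _]; move: ij; rewrite e ltnn.
rewrite /blue_triple pab pbc pac /=.
have := hf i j ij; case/and3P => _ hF _.
move/forallP: hF => /(_ (phi (i, a))); rewrite phiA /= => /forallP /(_ (phi (j, c))).
rewrite phiA /= => /forallP /(_ (phi (i, b))).
rewrite phiP /= (subsetP (hA1 _).1 _ (phiA (i, b))) /= eq_sym pab /=.
done.
Qed.
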